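(* In the two-SP bandwidth game with minimum small-cell bandwidth constraints, suppose both constraints are violated by the unconstrained equilibrium, i.e. $B_{1,S}^{\mathrm{free}}<B_{1,S}^0$ and $B_{2,S}^{\mathrm{free}}<B_{2,S}^0$. Then the unique constrained Nash equilibrium $(B_{1,S}^*,B_{2,S}^* )$ is of one of the following types: (I) $B_{1,S}^*=B_{1,S}^0$ and $B_{2,S}^*=B_{2,S}^0$; or (II) exactly one SP sits at its lower bound and the other strictly exceeds it, i.e. $B_{1,S}^*=B_{1,S}^0,\ B_{2,S}^*>B_{2,S}^0$ or $B_{1,S}^*>B_{1,S}^0,\ B_{2,S}^*=B_{2,S}^0$. In particular, it is never the case that both $B_{1,S}^*>B_{1,S}^0$ and $B_{2,S}^*>B_{2,S}^0$.
   Context: Fixed parameters: $\alpha\in(0,1)$; densities $N_m>0$ (mobile users) and $N_f>0$ (fixed users); spectral efficiency $R_0>0$; common small-cell density $\lambda_S>1$ (macro density normalized to 1); total bandwidths $B_1,B_2>0$; regulatory lower bounds $B_{i,S}^0\in[0,B_i]$. Utility $u(r)=\frac{r^{1-\alpha}}{1-\alpha}$, $u'(r)=r^{-\alpha}$. Let $\epsilon=\lambda_S^{1/\alpha-1}$. Two-SP bandwidth game: SP $i\in\{1,2\}$ chooses small-cell bandwidth $B_{i,S}\in[B_{i,S}^0,B_i]$ and sets $B_{i,M}=B_i-B_{i,S}$. Given a profile, prices are market-clearing, mobile users use macro-cells and fixed users use small-cells, so the average rates are $R_S=\frac{\lambda_S(B_{1,S}+B_{2,S})R_0}{N_f}$ and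 $R_M=\frac{(B_{1,M}+B_{2,M})R_0}{N_m}$, and SP $i$'s payoff (revenue) is $S_i=R_0B_{i,M}R_M^{-\alpha}+R_0\lambda_SB_{i,S}R_S^{-\alpha}$ (a term with zero bandwidth is $0$). This game has a unique pure Nash equilibrium. Define $B_{i,S}^{\mathrm{free}}=\frac{\epsilon N_fB_i}{\epsilon N_f+N_m}$, the equilibrium small-cell bandwidth of SP $i$ when there are no constraints ($B_{i,S}^0=0$). *)

(* Defs.v *)
From Stdlib Require Import Reals.
Open Scope R_scope.

(* Revenue from one band: R0 * w * r^(-alpha), where w is the (effective)
   bandwidth and r the average rate; a term with zero bandwidth is 0. *)
Definition band_rev (alpha R0 w r : R) : R :=
  if Req_EM_T w 0 then 0 else R0 * w * Rpower r (- alpha).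

Definition rateS (lamS R0 Nf b1S b2S : R) : R := lamS * (b1S + b2S) * R0 / Nf.
Definition rateM (R0 Nm B1 B2 b1S b2S : R) : R :=
  ((B1 - b1S) + (B2 - b2S)) * R0 / Nm.

Definition payoff1 (alpha Nm Nf R0 lamS B1 B2 b1S b2S : R) : R :=
  band_rev alpha R0 (B1 - b1S) (rateM R0 Nm B1 B2 b1S b2S)
  + band_rev alpha R0 (lamS * b1S) (rateS lamS R0 Nf b1S b2S).
Definition payoff2 (alpha Nm Nf R0 lamS B1 B2 b1S b2S : R) : R :=
  band_rev alpha R0 (B2 - b2S) (rateM R0 Nm B1 B2 b1S b2S)
  + band_rev alpha R0 (lamS * b2S) (rateS lamS R0 Nf b1S b2S).

Definition is_NE (alpha Nm Nf R0 lamS B1 B2 B10 B20 b1 b2 : R) : Prop :=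
  B10 <= b1 <= B1 /\ B20 <= b2 <= B2 /\
  (forall x, B10 <= x <= B1 ->
     payoff1 alpha Nm Nf R0 lamS B1 B2 x b2 <= payoff1 alpha Nm Nf R0 lamS B1 B2 b1 b2) /\
  (forall y, B20 <= y <= B2 ->
     payoff2 alpha Nm Nf R0 lamS B1 B2 b1 y <= payoff2 alpha Nm Nf R0 lamS B1 B2 b1 b2).

Definition eps (alpha lamS : R) : R := Rpower lamS (/ alpha - 1).
Definition B_free (alpha Nm Nf lamS Bi : R) : R :=
  eps alpha lamS * Nf * Bi / (eps alpha lamS * Nf + Nm).

(* Main.v *)
Require Import Defs.
From Stdlib Require Import Reals Lra.
From Coquelicot Require Import Coquelicot.
Open Scope R_scope.

Definition F1 (alpha Nm Nf R0 lamS B1 B2 b2 x : R) : R :=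
  R0*(B1-x)*exp(-alpha*ln(((B1-x)+(B2-b2))*R0/Nm)) + R0*(lamS*x)*exp(-alpha*ln(lamS*(x+b2)*R0/Nf)).

Lemma payoff1_eq alpha Nm Nf R0 lamS B1 B2 x b2 :
  payoff1 alpha Nm Nf R0 lamS B1 B2 x b2 = F1 alpha Nm Nf R0 lamS B1 B2 b2 x.
Proof.
  unfold payoff1, F1, band_rev, rateM, rateS, Rpower.
  destruct (Req_EM_T (B1 - x) 0) as [e|e]; destruct (Req_EM_T (lamS * x) 0) as [e'|e'];
    try rewrite e; try rewrite e'; ring.
Qed.

Lemma payoff_sym alpha Nm Nf R0 lamS B1 B2 b1 y :
  payoff2 alpha Nm Nf R0 lamS B1 B2 b1 y = payoff1 alpha Nm Nf R0 lamS B2 B1 y b1.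
Proof.
  unfold payoff1, payoff2, rateM, rateS.
  replace (B1 - b1 + (B2 - y)) with (B2 - y + (B1 - b1)) by ring.
  replace (b1 + y) with (y + b1) by ring. reflexivity.
Qed.

Lemma expl x y : x <= y -> exp x <= exp y.
Proof. intros [H|H]; [left; apply exp_increasing; auto| subst; lra]. Qed.
Lemma fo_cond (f : R -> R) (b lo D: R): derivable_pt_lim f b D -> lo < b ->
  (forall x, lo <= x <= b -> f x <= f b) -> 0 <= D.
Proof.
  intros Hd Hlo Hbr. destruct (Rle_or_lt 0 D) as [|HD]; [auto|exfalso].
  assert (He : 0 < - D / 2) by lra.
  destruct (Hd _ He) as [[del Hdel] Hk]. simpl in Hk.
  set (h := - Rmin (del/2) (b - lo)).
  assert (Hm1 : Rmin (del/2) (b-lo) <= del/2) by apply Rmin_l.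
  assert (Hm2 : Rmin (del/2) (b-lo) <= b - lo) by apply Rmin_r.
  assert (Hm3 : 0 < Rmin (del/2) (b-lo)) by (apply Rmin_pos; lra).
  assert (Hh0 : h <> 0) by (unfold h; lra).
  assert (Hha : Rabs h < del) by (unfold h; rewrite Rabs_Ropp, Rabs_pos_eq; lra).
  specialize (Hk h Hh0 Hha).
  assert (Hle : f (b + h) <= f b) by (apply Hbr; unfold h; lra).
  apply Rabs_def2 in Hk. destruct Hk as [Hk1 Hk2].
  assert (Hq : 0 <= (f (b + h) - f b) / h).
  { unfold Rdiv. replace ((f (b + h) - f b) * / h) with ((f b - f (b+h)) * / (-h)) by (field; auto).
    apply Rmult_le_pos; [lra|]. left; apply Rinv_0_lt_compat; unfold h; lra. }
  lra.
Qed.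

Lemma der1 (alpha Nm Nf R0 lamS B1 B2 b2 x : R) :
  0 < Nm -> 0 < Nf -> 0 < R0 -> 0 < lamS -> 0 < (B1 - x) + (B2 - b2) -> 0 < x + b2 ->
  is_derive (fun x => R0*(B1-x)*exp(-alpha*ln(((B1-x)+(B2-b2))*R0/Nm)) + R0*(lamS*x)*exp(-alpha*ln(lamS*(x+b2)*R0/Nf))) x
  (R0 * ( - exp(-alpha*ln(((B1-x)+(B2-b2))*R0/Nm)) + (B1-x)*alpha*exp(-alpha*ln(((B1-x)+(B2-b2))*R0/Nm)) / ((B1-x)+(B2-b2))
          + lamS * exp(-alpha*ln(lamS*(x+b2)*R0/Nf)) - lamS * x * alpha * exp(-alpha*ln(lamS*(x+b2)*R0/Nf)) / (x + b2))).
Proof.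
  intros. auto_derive.
  - repeat split; apply Rdiv_lt_0_compat; try apply Rmult_lt_0_compat; try apply Rmult_lt_0_compat; nra.
  - unfold Rminus, Rdiv.
    set (E1 := exp _). set (E2 := exp (_ * ln (lamS * _ * _ * _))).
    field. repeat split; try lra; nra.
Qed.

Definition D1 (alpha Nm Nf R0 lamS B1 B2 b2 x : R) : R :=
  (R0 * ( - exp(-alpha*ln(((B1-x)+(B2-b2))*R0/Nm)) + (B1-x)*alpha*exp(-alpha*ln(((B1-x)+(B2-b2))*R0/Nm)) / ((B1-x)+(B2-b2))
          + lamS * exp(-alpha*ln(lamS*(x+b2)*R0/Nf)) - lamS * x * alpha * exp(-alpha*ln(lamS*(x+b2)*R0/Nf)) / (x + b2))).

Lemma cond1 alpha Nm Nf R0 lamS B1 B2 B10 b1 b2 :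
  0 < Nm -> 0 < Nf -> 0 < R0 -> 0 < lamS -> 0 <= B10 -> B10 < b1 -> 0 <= b2 ->
  0 < (B1 - b1) + (B2 - b2) ->
  (forall x, B10 <= x <= B1 -> payoff1 alpha Nm Nf R0 lamS B1 B2 x b2 <= payoff1 alpha Nm Nf R0 lamS B1 B2 b1 b2) ->
  b1 <= B1 ->
  0 <= D1 alpha Nm Nf R0 lamS B1 B2 b2 b1.
Proof.
  intros. apply (fo_cond (F1 alpha Nm Nf R0 lamS B1 B2 b2) b1 B10).
  - apply is_derive_Reals. unfold F1, D1. apply der1; lra.
  - lra.
  - intros x Hx. rewrite <- !payoff1_eq. apply H7; lra.
Qed.

Lemma corner alpha Nm Nf R0 lamS B1 B2 B10 :
  0 < alpha -> 0 < Nm -> 0 < Nf -> 0 < R0 -> 0 < lamS -> 0 <= B10 -> B10 < B1 -> 0 < B2 ->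
  exists x, B10 <= x <= B1 /\
   payoff1 alpha Nm Nf R0 lamS B1 B2 B1 B2 < payoff1 alpha Nm Nf R0 lamS B1 B2 x B2.
Proof.
  intros Ha HNm HNf HR0 Hl HB10 HB1 HB2.
  set (G := exp(-alpha*ln(lamS*(0+B2)*R0/Nf))).
  assert (HG : 0 < G) by apply exp_pos.
  set (t0 := Nm/R0 * exp(-(ln(lamS*G))/alpha - 1)).
  assert (Ht0 : 0 < t0) by (unfold t0; apply Rmult_lt_0_compat; [apply Rdiv_lt_0_compat; lra| apply exp_pos]).
  set (t := Rmin t0 (B1 - B10)).
  assert (Ht1 : t <= t0) by apply Rmin_l.
  assert (Ht2 : t <= B1 - B10) by apply Rmin_r.
  assert (Ht : 0 < t) by (apply Rmin_pos; lra).
  exists (B1 - t). split; [lra|].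
  rewrite !payoff1_eq. unfold F1.
  replace (B1 - B1) with 0 by ring. replace (B2 - B2) with 0 by ring.
  replace (B1 - (B1 - t)) with t by ring. replace (t + 0) with t by ring.
  set (Et := exp (- alpha * ln (t * R0 / Nm))).
  set (G1 := exp (- alpha * ln (lamS * (B1 + B2) * R0 / Nf))).
  set (Gx := exp (- alpha * ln (lamS * (B1 - t + B2) * R0 / Nf))).
  assert (HGx : Gx <= G).
  { unfold Gx, G. apply expl. apply Rmult_le_compat_neg_l; [lra|].
    apply ln_le.
    - repeat apply Rdiv_lt_0_compat || apply Rmult_lt_0_compat; lra.
    - unfold Rdiv. apply Rmult_le_compat_r; [left; apply Rinv_0_lt_compat; lra|].
      apply Rmult_le_compat_r; [lra|]. apply Rmult_le_compat_l; lra. }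
  assert (HG1 : G1 <= Gx).
  { unfold Gx, G1. apply expl. apply Rmult_le_compat_neg_l; [lra|].
    apply ln_le.
    - repeat apply Rdiv_lt_0_compat || apply Rmult_lt_0_compat; lra.
    - unfold Rdiv. apply Rmult_le_compat_r; [left; apply Rinv_0_lt_compat; lra|].
      apply Rmult_le_compat_r; [lra|]. apply Rmult_le_compat_l; lra. }
  assert (HG1p : 0 < G1) by apply exp_pos.
  assert (HEt : lamS * G < Et).
  { unfold Et. rewrite <- (exp_ln (lamS * G)) by (apply Rmult_lt_0_compat; lra).
    apply exp_increasing.
    assert (Hln : ln (t * R0 / Nm) <= -(ln(lamS*G))/alpha - 1).
    { replace (-(ln(lamS*G))/alpha - 1) with (ln (t0 * R0 / Nm)).
      - apply ln_le. repeat apply Rdiv_lt_0_compat || apply Rmult_lt_0_compat; lra.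
        unfold Rdiv. apply Rmult_le_compat_r; [left; apply Rinv_0_lt_compat; lra|].
        apply Rmult_le_compat_r; lra.
      - unfold t0. replace (Nm / R0 * exp (- ln (lamS * G) / alpha - 1) * R0 / Nm)
          with (exp (- ln (lamS * G) / alpha - 1)) by (field; lra).
        apply ln_exp. }
    apply Rmult_le_compat_l with (r := alpha) in Hln; [|lra].
    replace (alpha * (- ln (lamS * G) / alpha - 1)) with (- ln (lamS * G) - alpha) in Hln by (field; lra).
    lra. }
  assert (HEtp : 0 < Et) by apply exp_pos.
  assert (Hk : lamS * (B1 * G1 - (B1 - t) * Gx) <= lamS * t * G).
  { assert (B1 * G1 <= B1 * Gx) by (apply Rmult_le_compat_l; lra).
    assert (t * Gx <= t * G) by (apply Rmult_le_compat_l; lra).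
    assert (B1 * G1 - (B1 - t) * Gx <= t * G) by lra.
    replace (lamS * t * G) with (lamS * (t*G)) by ring.
    apply Rmult_le_compat_l; lra. }
  assert (Hk2 : lamS * t * G < t * Et).
  { replace (lamS * t * G) with (t * (lamS * G)) by ring. apply Rmult_lt_compat_l; lra. }
  assert (Hk3 : R0 * (lamS * B1) * G1 < R0 * t * Et + R0 * (lamS * (B1 - t)) * Gx).
  { assert (Hz : lamS * B1 * G1 < t * Et + lamS * (B1 - t) * Gx) by nra.
    apply Rmult_lt_compat_l with (r := R0) in Hz; [|lra]. nra. }
  replace (R0 * 0 * exp (- alpha * ln ((0 + 0) * R0 / Nm))) with 0 by ring.
  lra.
Qed.

Theorem proposition1 (alpha Nm Nf R0 lamS B1 B2 B10 B20 b1 b2 : R) :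
  0 < alpha < 1 -> 0 < Nm -> 0 < Nf -> 0 < R0 -> 1 < lamS ->
  0 < B1 -> 0 < B2 -> 0 <= B10 <= B1 -> 0 <= B20 <= B2 ->
  B_free alpha Nm Nf lamS B1 < B10 ->
  B_free alpha Nm Nf lamS B2 < B20 ->
  is_NE alpha Nm Nf R0 lamS B1 B2 B10 B20 b1 b2 ->
  (b1 = B10 /\ b2 = B20) \/
  (b1 = B10 /\ b2 > B20) \/
  (b1 > B10 /\ b2 = B20).
Proof.
  intros Ha HNm HNf HR0 Hl HB1 HB2 HB10 HB20 Hf1 Hf2 [[h1 h1'] [[h2 h2'] [BR1 BR2]]].
  destruct h1 as [g1|e1]; destruct h2 as [g2|e2]; try (subst; tauto).
  exfalso.
  destruct (Rle_lt_or_eq 0 ((B1 - b1) + (B2 - b2))) as [HM|HM]; [lra| |].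
  2:{ assert (b1 = B1) by lra. assert (b2 = B2) by lra. subst.
      destruct (corner alpha Nm Nf R0 lamS B1 B2 B10) as [x [Hx Hlt]]; try lra.
      specialize (BR1 x Hx). lra. }
  assert (C1 := cond1 alpha Nm Nf R0 lamS B1 B2 B10 b1 b2 HNm HNf HR0 ltac:(lra) ltac:(lra) g1 ltac:(lra) HM BR1 h1').
  assert (BR2' : forall y, B20 <= y <= B2 -> payoff1 alpha Nm Nf R0 lamS B2 B1 y b1 <= payoff1 alpha Nm Nf R0 lamS B2 B1 b2 b1).
  { intros y Hy. rewrite <- !payoff_sym. apply BR2; auto. }
  assert (C2 := cond1 alpha Nm Nf R0 lamS B2 B1 B20 b2 b1 HNm HNf HR0 ltac:(lra) ltac:(lra) g2 ltac:(lra) ltac:(lra) BR2' h2').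
  unfold D1 in C1, C2.
  replace (B2 - b2 + (B1 - b1)) with (B1 - b1 + (B2 - b2)) in C2 by ring.
  replace (b2 + b1) with (b1 + b2) in C2 by ring.
  set (M := B1 - b1 + (B2 - b2)) in *.
  set (S := b1 + b2) in *.
  set (EM := exp (- alpha * ln (M * R0 / Nm))) in *.
  set (ES := exp (- alpha * ln (lamS * S * R0 / Nf))) in *.
  assert (HS : 0 < S) by (unfold S; lra).
  assert (Hsum : R0 * (- EM + (B1 - b1) * alpha * EM / M + lamS * ES - lamS * b1 * alpha * ES / S) +
     R0 * (- EM + (B2 - b2) * alpha * EM / M + lamS * ES - lamS * b2 * alpha * ES / S)
     = R0 * (2 - alpha) * (lamS * ES - EM)) by (unfold M, S in *; field; lra).
  assert (Hpos : 0 < R0 * (2 - alpha)) by (apply Rmult_lt_0_compat; lra).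
  assert (HE : EM <= lamS * ES).
  { destruct (Rle_or_lt EM (lamS * ES)) as [|Hc]; auto.
    assert (0 < R0 * (2 - alpha) * (EM - lamS * ES)) by (apply Rmult_lt_0_compat; lra). lra. }
  assert (HEMp : 0 < EM) by apply exp_pos.
  apply ln_le in HE; [|auto].
  unfold EM in HE. rewrite ln_mult, !ln_exp in HE by (try lra; apply exp_pos).
  unfold ES in HE. rewrite ln_exp in HE.
  rewrite (ln_div (M*R0)), (ln_mult M), (ln_div (lamS*S*R0)), (ln_mult (lamS*S)), (ln_mult lamS) in HE
    by (repeat apply Rmult_lt_0_compat; lra).
  unfold B_free in Hf1, Hf2.
  set (e := eps alpha lamS) in *.
  assert (He : 0 < e) by (unfold e, eps, Rpower; apply exp_pos).
  assert (Hd : 0 < e * Nf + Nm) by nra.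
  assert (Hb1 : e * Nf * B1 < b1 * (e * Nf + Nm)).
  { apply Rmult_lt_compat_r with (r := e*Nf+Nm) in Hf1; [|lra].
    replace (e * Nf * B1 / (e * Nf + Nm) * (e * Nf + Nm)) with (e*Nf*B1) in Hf1 by (field; lra). nra. }
  assert (Hb2 : e * Nf * B2 < b2 * (e * Nf + Nm)).
  { apply Rmult_lt_compat_r with (r := e*Nf+Nm) in Hf2; [|lra].
    replace (e * Nf * B2 / (e * Nf + Nm) * (e * Nf + Nm)) with (e*Nf*B2) in Hf2 by (field; lra). nra. }
  assert (HSM : e * Nf * M < S * Nm) by (unfold M, S; nra).
  apply ln_increasing in HSM; [|repeat apply Rmult_lt_0_compat; lra].
  rewrite !ln_mult in HSM by (repeat apply Rmult_lt_0_compat; lra).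
  assert (Hle : ln e = (/ alpha - 1) * ln lamS) by (unfold e, eps, Rpower; apply ln_exp).
  rewrite Hle in HSM.
  apply Rmult_lt_compat_l with (r := alpha) in HSM; [|lra].
  replace (alpha * ((/ alpha - 1) * ln lamS + ln Nf + ln M)) with
     ((1 - alpha) * ln lamS + alpha * ln Nf + alpha * ln M) in HSM by (field; lra).
  lra.
Qed.
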